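(* For every $w\in S_n$, the quotient groups $\mathfrak{ut}_n/\mathfrak{ut}_{w^{-1}}$ and $\mathfrak{ut}_n/\mathfrak{ut}_w$ are isomorphic.
   Context: Let $q$ be a prime power and $\mathfrak{ut}_n$ the additive group of strictly upper triangular $n\times n$ matrices over $\mathbb{F}_q$. For $w\in S_n$ (one-line notation), $\iota_k(w)=\#\{i<w^{-1}(k):w(i)>k\}$ and $\mathfrak{ut}_w=\{x\in\mathfrak{ut}_n:x_{ij}\ne0\Rightarrow0<j-i\le\iota_i(w)\}$, a subgroup of $\mathfrak{ut}_n$. *)

(* Defs.v *)
From HB Require Import structures.
From mathcomp Require Import all_boot all_order all_algebra all_fingroup.
Set Implicit Arguments. Unset Strict Implicit. Unset Printing Implicit Defensive.
Import GRing.Theory.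
Local Open Scope ring_scope.

Definition mxgroup (F : finFieldType) (n : nat) : finGroupType :=
  FinRing.Zmodule_to_finGroup ('M[F]_n : finZmodType).

(* iota_k(w) = #{ i < w^-1(k) : w(i) > k }  (indices 0-based) *)
Definition iota_perm (n : nat) (w : 'S_n) (k : 'I_n) : nat :=
  #|[set i : 'I_n | (i < (w^-1)%g k)%N && (k < w i)%N]|.

Definition ut (F : finFieldType) (n : nat) : {set mxgroup F n} :=
  [set x : 'M[F]_n | [forall i : 'I_n, forall j : 'I_n,
      (x i j != 0) ==> (i < j)%N]].

Definition utw (F : finFieldType) (n : nat) (w : 'S_n) : {set mxgroup F n} :=
  [set x : 'M[F]_n | [forall i : 'I_n, forall j : 'I_n,
      (x i j != 0) ==> (0 < j - i <= iota_perm w i)%N]].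

Lemma utw_group_set (F : finFieldType) (n : nat) (w : 'S_n) :
  group_set (utw F w).
Proof.
apply/andP; split.
  by rewrite inE; apply/forallP => i; apply/forallP => j; rewrite mxE eqxx.
apply/subsetP => _ /imset2P [x y Hx Hy ->].
move: Hx Hy; rewrite !inE => /forallP Hx /forallP Hy.
apply/forallP => i; apply/forallP => j.
have /forallP /(_ j) := Hx i; have /forallP /(_ j) := Hy i.
have -> : (x * y)%g i j = x i j + y i j by rewrite /= mxE.
case: (x i j =P 0) => [->|/eqP nx] /=; first by rewrite add0r.
by move=> _ ->; rewrite implybT.
Qed.
Canonical utw_group F n w := Group (@utw_group_set F n w).

Lemma ut_group_set (F : finFieldType) (n : nat) : group_set (ut F n).
Proof.
apply/andP; split.
  by rewrite inE; apply/forallP => i; apply/forallP => j; rewrite mxE eqxx.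
apply/subsetP => _ /imset2P [x y Hx Hy ->].
move: Hx Hy; rewrite !inE => /forallP Hx /forallP Hy.
apply/forallP => i; apply/forallP => j.
have /forallP /(_ j) := Hx i; have /forallP /(_ j) := Hy i.
have -> : (x * y)%g i j = x i j + y i j by rewrite /= mxE.
case: (x i j =P 0) => [->|/eqP nx] /=; first by rewrite add0r.
by move=> _ ->; rewrite implybT.
Qed.
Canonical ut_group F n := Group (@ut_group_set F n).

(* Main.v *)
Require Import Defs.
Set Warnings "-notation-overridden,-ambiguous-paths".
From mathcomp Require Import all_boot all_order all_algebra all_fingroup.
From mathcomp Require Import abelian finfield.
Import GRing.Theory.
Local Open Scope ring_scope.

Lemma card_supp (F : finFieldType) n (P : {pred 'I_n * 'I_n}) :
  #|[set x : 'M[F]_n | [forall i, forall j, (x i j != 0) ==> P (i,j)]]| = (#|F| ^ #|P|)%N.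
Proof.
have inj : injective (@Matrix F n n) by move=> f g /(congr1 (@mx_val _ _ _)).
have -> : #|F| = #|@predT F| by apply: eq_card.
rewrite -(card_pffun_on (0:F) P predT) -(card_imset _ inj).
apply: eq_card => -[f].
rewrite inE mem_imset //; apply/forallP/pfamilyP => [H|[/supportP H _] i].
  split=> [|x _]; last by [].
  apply/supportP => -[i j] /=; have /forallP/(_ j) := H i.
  by rewrite [Matrix _ _ _]/fun_of_matrix /= => /implyP h; apply: contraNeq h.
apply/forallP => j; rewrite [Matrix _ _ _]/fun_of_matrix /=; apply/implyP => nz.
by apply: contraNT nz => /H ->; rewrite eqxx.
Qed.

From mathcomp Require Import zify.

Lemma card_range n a b : (b <= n)%N -> #|[set j : 'I_n | (a <= j < b)%N]| = (b - a)%N.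
Proof.
move=> hb; rewrite -sum1dep_card.
transitivity (\sum_(0 <= j < n | (a <= j < b)%N) 1)%N; first by rewrite big_mkord.
rewrite -(big_nat_widen 0 _ _ (fun j => a <= j)%N) //.
by rewrite -(big_nat_widenl a 0 b xpredT (fun _ => 1%N)) // sum_nat_const_nat muln1.
Qed.

Lemma card_pairs n (Q : 'I_n -> 'I_n -> bool) :
  #|[set p : 'I_n * 'I_n | Q p.1 p.2]| = (\sum_i #|[set j | Q i j]|)%N.
Proof.
rewrite -sum1dep_card -(pair_big_dep xpredT Q (fun _ _ => 1%N)).
by apply: eq_bigr => i _; rewrite sum1dep_card.
Qed.

Lemma iota_bound n (w : 'S_n) k : (iota_perm w k <= n - k.+1)%N.
Proof.
rewrite /iota_perm.
have h2 : #|(fun_of_perm w) @^-1: [set j : 'I_n | (k.+1 <= j < n)%N]| = (n - k.+1)%N.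
  by rewrite card_preimset ?card_range //; apply: perm_inj.
rewrite -h2; apply: subset_leq_card; apply/subsetP => i; rewrite !inE => /andP[_ h].
by rewrite h ltn_ord.
Qed.

Lemma card_S n (w : 'S_n) :
  #|[set p : 'I_n * 'I_n | (0 < p.2 - p.1 <= iota_perm w p.1)%N]| = (\sum_k iota_perm w k)%N.
Proof.
rewrite (@card_pairs _ (fun i j : 'I_n => (0 < j - i <= iota_perm w i)%N)).
apply: eq_bigr => i _.
have hb := @iota_bound _ w i.
transitivity #|[set j : 'I_n | (i.+1 <= j < (i + iota_perm w i).+1)%N]|.
  apply: eq_card => j; rewrite !inE.
  by apply/idP/idP => /andP[h1 h2]; apply/andP; split; lia.
rewrite card_range; first lia.
by have := ltn_ord i; lia.
Qed.

Lemma sum_iota_inv n (w : 'S_n) :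
  (\sum_k iota_perm w k)%N = (\sum_k iota_perm (w^-1)%g k)%N.
Proof.
pose B (u : 'S_n) := [set p : 'I_n * 'I_n | (p.2 < (u^-1)%g p.1)%N && (p.1 < u p.2)%N].
have HB u : (\sum_k iota_perm u k)%N = #|B u|.
  by rewrite (@card_pairs _ (fun k i : 'I_n => (i < (u^-1)%g k)%N && (k < u i)%N)).
rewrite !HB.
have sinj : injective (fun p : 'I_n * 'I_n => (p.2, p.1)) by move=> [a b] [c d] [-> ->].
rewrite -(card_preimset _ sinj).
apply: eq_card => -[k i]; rewrite !inE /= invgK.
by rewrite andbC.
Qed.

Lemma card_utw (F : finFieldType) n (w : 'S_n) :
  #|utw F w| = (#|F| ^ (\sum_k iota_perm w k))%N.
Proof.
have -> : (\sum_k iota_perm w k)%N = #|[pred p : 'I_n * 'I_n | (0 < p.2 - p.1 <= iota_perm w p.1)%N]|.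
  by rewrite -card_S; apply: eq_card => p; rewrite !inE.
rewrite -(@card_supp F n [pred p : 'I_n * 'I_n | (0 < p.2 - p.1 <= iota_perm w p.1)%N]).
by apply: eq_card => x; rewrite !inE.
Qed.

Lemma utw_sub (F : finFieldType) n (w : 'S_n) : utw F w \subset ut F n.
Proof.
apply/subsetP => x; rewrite !inE => /forallP H; apply/forallP => i; apply/forallP => j.
apply/implyP => nz; have /forallP/(_ j)/implyP/(_ nz)/andP[h _] := H i.
by rewrite subn_gt0 in h.
Qed.

Theorem proposition3p4 (F : finFieldType) (n : nat) (w : 'S_n) :
  ((ut F n / utw F (w^-1)%g) \isog (ut F n / utw F w))%g.
Proof.
have [p pr chp] := finPcharP F.
have ab : (p.-abelem (ut F n))%g.
  apply/(abelemP pr); split; first by apply/centsP => x _ y _; apply: addrC.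
  move=> x _; rewrite FinRing.zmodXgE; apply/matrixP => i j.
  by rewrite mulmxnE mxE mulrn_pchar.
have Hq u : #|(ut F n / utw F u)%g| = (#|ut F n| %/ #|utw F u|)%N.
  rewrite card_quotient; last by apply: cents_norm; apply/centsP => x _ y _; apply: addrC.
  by rewrite -divgI (setIidPr (@utw_sub F n u)).
rewrite (isog_abelem_card _ (quotient_abelem _ ab)) quotient_abelem //=.
by rewrite !Hq !card_utw sum_iota_inv.
Qed.
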